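(* Let $\Gamma$ be a distance-regular graph with diameter $D\ge 3$, and let $\sigma_0,\dots,\sigma_D$ and $\rho_0,\dots,\rho_D$ be nontrivial pseudo cosine sequences of $\Gamma$. Then the following are equivalent: (i) $\sigma_0,\dots,\sigma_D$ and $\rho_0,\dots,\rho_D$ form a tight pair; (ii) there exists a real number $\varepsilon$ such that $$\sigma_i\rho_i-\sigma_{i-1}\rho_{i-1}=\varepsilon(\sigma_{i-1}\rho_i-\sigma_i\rho_{i-1})\qquad(1\le i\le D).$$
   Context: $\Gamma$ is a finite connected undirected graph without loops or multiple edges, distance-regular with diameter $D$, intersection numbers $a_i,b_i,c_i$ ($c_0=0$, $b_D=0$), valency $k$, $c_i+a_i+b_i=k$. For $\theta\in\mathbb{R}$ the pseudo cosine sequence for $\theta$ is the sequence of reals $\sigma_0,\dots,\sigma_D$ with $\sigma_0=1$ and $c_i\sigma_{i-1}+a_i\sigma_i+b_i\sigma_{i+1}=\theta\sigma_i$ for $0\le i\le D-1$. It is nontrivial if $\sigma_1\ne1$ (the trivial one is that for $\theta=k$, all ones). Pseudo cosine sequences $\sigma_i$, $\rho_i$ form a tight pair if $(\sigma_i\rho_i)_{i=0}^D$ is a pseudo cosine sequence. *)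

(* Defs.v *)
From HB Require Import structures.
From mathcomp Require Import all_boot all_order all_algebra.
From mathcomp Require Import reals.
Set Implicit Arguments. Unset Strict Implicit. Unset Printing Implicit Defensive.
Import Order.TTheory GRing.Theory Num.Theory.

Definition simple_graph (T : finType) (e : rel T) : Prop :=
  symmetric e /\ irreflexive e.

Definition connected_graph (T : finType) (e : rel T) : Prop :=
  forall x y : T, connect e x y.

Fixpoint ball (T : finType) (e : rel T) (n : nat) (x : T) : {set T} :=
  match n with
  | 0 => [set x]
  | n'.+1 => ball e n' x :|: [set y | [exists z in ball e n' x, e z y]]
  end.

(* graph distance: least n with y in ball n x (= #|T| if unreachable) *)
Definition dist (T : finType) (e : rel T) (x y : T) : nat :=
  find (fun n => y \in ball e n x) (iota 0 #|T|).

Definition diameter (T : finType) (e : rel T) : nat :=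
  \max_(x : T) \max_(y : T) dist e x y.

Definition distance_regular (T : finType) (e : rel T)
    (a b c : nat -> nat) : Prop :=
  forall x y : T,
    [/\ #|[set z | e y z & (dist e x z).+1 == dist e x y]| = c (dist e x y),
        #|[set z | e y z & dist e x z == dist e x y]| = a (dist e x y) &
        #|[set z | e y z & dist e x z == (dist e x y).+1]| = b (dist e x y)].

Local Open Scope ring_scope.

Definition pseudo_cosine (R : realType) (D : nat) (a b c : nat -> nat)
    (theta : R) (s : nat -> R) : Prop :=
  s 0%N = 1 /\
  forall i : nat, (i < D)%N ->
    (c i)%:R * s i.-1 + (a i)%:R * s i + (b i)%:R * s i.+1 = theta * s i.

Definition is_pseudo_cosine (R : realType) (D : nat) (a b c : nat -> nat)
    (s : nat -> R) : Prop :=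
  exists theta : R, pseudo_cosine D a b c theta s.

Definition nontrivial_pc (R : realType) (s : nat -> R) : Prop := s 1%N != 1.

Definition tight_pair (R : realType) (D : nat) (a b c : nat -> nat)
    (s r : nat -> R) : Prop :=
  is_pseudo_cosine D a b c (fun i => s i * r i).

(* Main.v *)
Require Import Defs.
From HB Require Import structures.
From mathcomp Require Import all_boot all_order all_algebra.
From mathcomp Require Import reals.
From mathcomp Require Import ring lra zify.
Import Order.TTheory GRing.Theory Num.Theory.
Section Graph.
Variables (T : finType) (e : rel T).

Lemma dist_le {n x y} : y \in ball e n x -> (dist e x y <= n)%N.
Proof.
move=> hy; rewrite /dist.
case: (ltnP n #|T|) => hn.
  rewrite leqNgt; apply/negP => hlt.
  have := before_find 0%N hlt; rewrite nth_iota // add0n hy //.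
by apply: leq_trans (find_size _ _) _; rewrite size_iota.
Qed.

Lemma dist_leT x y : (dist e x y <= #|T|)%N.
Proof. by rewrite /dist; apply: leq_trans (find_size _ _) _; rewrite size_iota. Qed.

Lemma dist_ball x y : (dist e x y < #|T|)%N -> y \in ball e (dist e x y) x.
Proof.
move=> h; have hh : has (fun n => y \in ball e n x) (iota 0 #|T|).
  by rewrite has_find size_iota.
by have := nth_find 0%N hh; rewrite nth_iota ?add0n // -(size_iota 0 #|T|) -has_find.
Qed.

Lemma ball_S {n x y z} : y \in ball e n x -> e y z -> z \in ball e n.+1 x.
Proof.
move=> hy hyz /=; rewrite in_setU; apply/orP; right.
by rewrite inE; apply/existsP; exists y; rewrite hy hyz.
Qed.

Lemma dist_nb x y z : e y z -> (dist e x z <= (dist e x y).+1)%N.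
Proof.
move=> hyz; case: (ltnP (dist e x y) #|T|) => h.
  by apply: dist_le; apply: ball_S hyz; apply: (@dist_ball x y).
by apply: leq_trans (dist_leT x z) _; apply: leq_trans h _.
Qed.

Lemma dist_xx x : dist e x x = 0%N.
Proof. by apply/eqP; rewrite -leqn0; apply: dist_le; rewrite /= inE. Qed.

Lemma dist0 x y : dist e x y = 0%N -> y = x.
Proof.
move=> h; have hT : (0 < #|T|)%N by apply/card_gt0P; exists x.
by have := @dist_ball x y; rewrite h => /(_ hT); rewrite /= inE => /eqP.
Qed.

Lemma dist_pred x y : (0 < dist e x y < #|T|)%N ->
  exists z, e z y /\ dist e x z = (dist e x y).-1.
Proof.
case/andP=> h0 hT; have hb := @dist_ball x y hT.
move: h0 hb; case hd: (dist e x y) => [|m] // _ /=.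
rewrite in_setU => /orP [hm|].
  by have := dist_le hm; rewrite hd ltnn.
rewrite inE => /existsP [z /andP [hz hzy]]; exists z; split => //=.
apply/eqP; rewrite eqn_leq dist_le //=.
by have := @dist_nb x z y hzy; rewrite hd ltnS.
Qed.

Lemma chain x n : forall y, dist e x y = n -> (n < #|T|)%N ->
  forall i, (i < n)%N -> exists w w', [/\ dist e x w = i, dist e x w' = i.+1 & e w w'].
Proof.
elim: n => [|n IH] y hy hT i hi //.
have [|z [hzy hz]] := dist_pred x y; first by rewrite hy hT.
rewrite hy /= in hz.
case: (ltngtP i n) => hin.
- by apply: (IH z hz (ltnW hT)).
- by move: hi; rewrite ltnS leqNgt hin.
- by exists z, y; rewrite hz hy hin.
Qed.

Lemma path_ball {x p} : path e x p -> last x p \in ball e (size p) x.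
Proof.
elim/last_ind: p => [|p z IH]; first by rewrite /= inE.
rewrite rcons_path last_rcons size_rcons => /andP [hp hz].
exact: ball_S (IH hp) hz.
Qed.

Lemma dist_ltT x y : connected_graph e -> (dist e x y < #|T|)%N.
Proof.
move=> hc; have /connectP [p hp ->] := hc x y.
case: (shortenP hp) => p' hp' hu _.
apply: leq_ltn_trans (dist_le (path_ball hp')) _.
have := max_card (mem (x :: p')); rewrite (card_uniqP hu) /=.
done.
Qed.

End Graph.
Local Open Scope ring_scope.
Lemma poly_step (R : realFieldType) (a b x t : R) : 0 <= a -> 0 < b ->
  1 + a * x + b * t = (1 + a + b) * x ^+ 2 ->
  1 + a * x ^+ 2 + b * t ^+ 2 = (1 + a + b) * x ^+ 4 -> x ^+ 2 = 1.
Proof.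
move=> ha hb E1 E2.
have bt : b * t = (1 + a + b) * x ^+ 2 - a * x - 1 by rewrite -E1; ring.
have E : b * (1 + a * x ^+ 2 - (1 + a + b) * x ^+ 4) +
   ((1 + a + b) * x ^+ 2 - a * x - 1) ^+ 2 = 0.
  rewrite -bt; transitivity (b * (1 + a * x ^+ 2 + b * t ^+ 2 - (1 + a + b) * x ^+ 4)).
    by ring.
  by rewrite E2 subrr mulr0.
set k := 1 + a + b.
have hk : 0 < k by rewrite /k; lra.
have F : (x - 1) ^+ 2 * (k * (1 + a) * x ^+ 2 + 2 * k * x + (k - a)) = 0.
  by rewrite -E /k; ring.
move/eqP: F; rewrite mulf_eq0 => /orP [|/eqP Q].
  by rewrite expf_eq0 /= subr_eq0 => /eqP ->; rewrite expr1n.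
have G : (k * (1 + a) * x + k) ^+ 2 + k * a * b = 0.
  transitivity (k * (1 + a) * (k * (1 + a) * x ^+ 2 + 2 * k * x + (k - a))).
    by rewrite /k; ring.
  by rewrite Q mulr0.
have h1 : 0 <= (k * (1 + a) * x + k) ^+ 2 by apply: sqr_ge0.
have h2 : 0 <= k * a * b by apply: mulr_ge0; [apply: mulr_ge0|]; lra.
have h3 : k * a * b = 0 by lra.
have a0 : a = 0.
  move/eqP: h3; rewrite !mulf_eq0 => /orP [/orP [|/eqP //]|]; by move=> /eqP h; lra.
move: Q; rewrite a0 => Q.
have : k * (x + 1) ^+ 2 = 0 by rewrite -Q; ring.
move/eqP; rewrite mulf_eq0 => /orP [/eqP h|]; first lra.
rewrite expf_eq0 /= addr_eq0 => /eqP ->; by rewrite sqrrN expr1n.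
Qed.
Lemma main_alg (R : realType) (D k : nat) (a b c : nat -> nat) (s r : nat -> R) :
  c 0%N = 0%N -> a 0%N = 0%N -> b 0%N = k ->
  (forall i, (i < D)%N -> c i + a i + b i = k)%N ->
  (forall i, (i < D)%N -> 0 < b i)%N -> c 1%N = 1%N -> (2 <= D)%N ->
  is_pseudo_cosine D a b c s -> is_pseudo_cosine D a b c r ->
  (tight_pair D a b c s r <->
   exists eps : R, forall i : nat, (1 <= i <= D)%N ->
     s i * r i - s i.-1 * r i.-1 = eps * (s i.-1 * r i - s i * r i.-1)).
Proof.
move=> Hc0 Ha0 Hb0 Hsum Hb Hc1 HD [th [hs0 hs]] [th' [hr0 hr]].
have hbR i : (i < D)%N -> (b i)%:R != 0 :> R.
  by move=> hi; rewrite pnatr_eq0 -lt0n; apply: Hb.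
have hsum i : (i < D)%N -> (a i)%:R = k%:R - (b i)%:R - (c i)%:R :> R.
  by move=> hi; rewrite -(Hsum i hi) !natrD; ring.
have es i : (i < D)%N ->
    s i.+1 = (th * s i - (c i)%:R * s i.-1 - (a i)%:R * s i) / (b i)%:R.
  by move=> hi; rewrite -(hs i hi); field; apply: hbR.
have er i : (i < D)%N ->
    r i.+1 = (th' * r i - (c i)%:R * r i.-1 - (a i)%:R * r i) / (b i)%:R.
  by move=> hi; rewrite -(hr i hi); field; apply: hbR.
have hD0 : (0 < D)%N by apply: leq_trans HD.
have hk : k%:R != 0 :> R by rewrite -Hb0; apply: hbR.
split.
- move=> [eta [hp0 hp]].
  have hp' i : (i < D)%N -> (c i)%:R * (s i.-1 * r i.-1) + (a i)%:R * (s i * r i)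
      + (b i)%:R * (s i.+1 * r i.+1) = eta * (s i * r i) by apply: hp.
  case: (eqVneq th th') => hth.
  +
    have s1 : s 1%N = th / k%:R.
      have := hs 0%N hD0; rewrite Hc0 Ha0 Hb0 hs0 /= !mul0r !add0r mulr1 => h.
      by rewrite -h; field.
    have r1 : r 1%N = th / k%:R.
      have := hr 0%N hD0; rewrite Hc0 Ha0 Hb0 hr0 hth /= !mul0r !add0r mulr1 => h.
      by rewrite -h; field.
    have hD1 : (1 < D)%N by [].
    have s2r2 : s 2%N = r 2%N.
      by rewrite (es 1%N hD1) (er 1%N hD1) /= hs0 hr0 s1 r1 hth.
    set x := s 1%N.
    have eta_e : eta = k%:R * x ^+ 2.
      have := hp' 0%N hD0; rewrite Hc0 Ha0 Hb0 /= hs0 hr0 r1 -s1 -/x !mul0r !add0r !mulr1 => h.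
      by rewrite -h; ring.
    have hx2 : x ^+ 2 = 1.
      have E2 := hp' 1%N hD1; have E1 := hs 1%N hD1.
      rewrite /= hs0 hr0 -s2r2 r1 -s1 -/x Hc1 eta_e in E2.
      rewrite /= hs0 Hc1 -/x in E1.
      have hk' : k%:R = 1 + (a 1%N)%:R + (b 1%N)%:R :> R.
        by rewrite -(Hsum 1%N hD1) Hc1 !natrD.
      have thx : th = k%:R * x by rewrite /x s1; field.
      apply: (@poly_step _ (a 1%N)%:R (b 1%N)%:R x (s 2%N)).
      * by apply: ler0n.
      * by rewrite ltr0n; apply: Hb.
      * rewrite -hk'; transitivity (th * x); last by rewrite thx; ring.
        by rewrite -E1; ring.
      * rewrite -hk'; transitivity (k%:R * x ^+ 2 * (x * x)); last by ring.
        by rewrite -E2; ring.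
    have eta_k : eta = k%:R by rewrite eta_e hx2 mulr1.
    have P j : (j <= D)%N -> s j * r j = 1 /\ s j.-1 * r j.-1 = 1.
      elim: j => [|j IH] hj; first by rewrite /= hs0 hr0 mulr1.
      have [h1 h2] := IH (ltnW hj); split => //=.
      have := hp' j hj; rewrite h1 h2 eta_k (hsum j hj) => h.
      apply: (mulfI (hbR j hj)); rewrite mulr1.
      move: h; set p1 := s j.+1 * r j.+1 => h.
      have -> : (b j)%:R * p1 = (c j)%:R * 1 + (k%:R - (b j)%:R - (c j)%:R) * 1
         + (b j)%:R * p1 - k%:R + (b j)%:R by ring.
      by rewrite h; ring.
    exists 0 => i /andP [_ hi]; have [-> ->] := P i hi; by rewrite subrr mul0r.
  +
    have hth' : th' - th != 0 by rewrite subr_eq0 eq_sym.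
    exists ((eta - k%:R) / (th' - th)).
    suff H j : (j <= D)%N -> s j * r j - s j.-1 * r j.-1 =
        (eta - k%:R) / (th' - th) * (s j.-1 * r j - s j * r j.-1).
      by move=> i /andP [_ hi]; apply: H.
    elim: j => [|j IH] hj; first by rewrite /= !subrr mulr0.
    have IH' : s j.-1 * r j.-1 = s j * r j -
        (eta - k%:R) / (th' - th) * (s j.-1 * r j - s j * r j.-1).
      by rewrite -(IH (ltnW hj)); ring.
    have ep : s j.+1 * r j.+1 = (eta * (s j * r j) - (c j)%:R * (s j.-1 * r j.-1)
         - (a j)%:R * (s j * r j)) / (b j)%:R.
      by rewrite -(hp' j hj); field; apply: hbR.
    rewrite /= ep IH' (es j hj) (er j hj) (hsum j hj).
    by field; rewrite hth' hbR.
- move=> [eps he].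
  exists (eps * (th' - th) + k%:R); split; first by rewrite /= hs0 hr0 mulr1.
  move=> i hi /=.
  have hu j : (j <= D)%N -> s j * r j - s j.-1 * r j.-1 =
      eps * (s j.-1 * r j - s j * r j.-1).
    by case: j => [|j] hj; [rewrite /= !subrr mulr0 | apply: he].
  have h1 : s i.-1 * r i.-1 = s i * r i - eps * (s i.-1 * r i - s i * r i.-1).
    by rewrite -(hu i (ltnW hi)); ring.
  have h2 : s i.+1 * r i.+1 = s i * r i + eps * (s i * r i.+1 - s i.+1 * r i).
    by rewrite -(hu i.+1 hi); ring.
  rewrite h2 h1 (es i hi) (er i hi) (hsum i hi).
  by field; apply: hbR.
Qed.
Local Close Scope ring_scope.
Lemma card_sumb (T : finType) (P : pred T) : #|[set z | P z]| = \sum_z (P z : nat).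
Proof. by rewrite -sum1_card big_mkcond; apply: eq_bigr => z _; rewrite inE; case: (P z). Qed.

Lemma deg_lemma (T : finType) (e : rel T) (a b c : nat -> nat) :
  symmetric e -> distance_regular e a b c -> forall x y : T,
  c (dist e x y) + a (dist e x y) + b (dist e x y) = #|[set z | e y z]|.
Proof.
move=> hsym hdr x y; have [<- <- <-] := hdr x y.
rewrite !card_sumb -!big_split /=; apply: eq_bigr => z _.
case hyz: (e y z) => //=.
have h1 := @dist_nb T e x y z hyz.
have h2 := @dist_nb T e x z y (etrans (hsym z y) hyz).
move: h1 h2; set m := dist e x z; set n := dist e x y => h1 h2.
by case: eqP => ?; case: eqP => ?; case: eqP => ? /=; lia.
Qed.

Arguments deg_lemma {T e a b c}.
Local Open Scope ring_scope.

Theorem theorem7p1 (R : realType) (T : finType) (e : rel T)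
    (a b c : nat -> nat) (s r : nat -> R) :
  simple_graph e -> connected_graph e -> distance_regular e a b c ->
  (3 <= diameter e)%N ->
  is_pseudo_cosine (diameter e) a b c s -> nontrivial_pc s ->
  is_pseudo_cosine (diameter e) a b c r -> nontrivial_pc r ->
  (tight_pair (diameter e) a b c s r <->
   exists eps : R, forall i : nat, (1 <= i <= diameter e)%N ->
     s i * r i - s i.-1 * r i.-1 = eps * (s i.-1 * r i - s i * r i.-1)).
Proof.
move=> [hsym hirr] hcon hdr hD hs _ hr _.
have hT : (0 < #|T|)%N.
  rewrite lt0n; apply/negP => /eqP h0; move: hD.
  have -> : diameter e = 0%N.
    apply/eqP; rewrite -leqn0; apply/bigmax_leqP => x _.
    by have := card0_eq h0 x; rewrite inE.
  by [].
have [x0 hx0] := @bigop.eq_bigmax _ (fun x => \max_y dist e x y) hT.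
have [y0 hy0] := @bigop.eq_bigmax _ (fun y => dist e x0 y) hT.
have hD0 : dist e x0 y0 = diameter e by rewrite /diameter hx0 hy0.
have hlt : (dist e x0 y0 < #|T|)%N by apply: dist_ltT.
have ch := @chain T e x0 _ y0 hD0 (etrans (esym (f_equal (fun n => n < #|T|)%N hD0)) hlt).
have Hc0 : c 0%N = 0%N.
  have [h1 _ _] := hdr x0 x0; rewrite dist_xx in h1; rewrite -h1.
  apply/eqP; rewrite cards_eq0; apply/eqP/setP => z; by rewrite !inE andbF.
have Ha0 : a 0%N = 0%N.
  have [_ h2 _] := hdr x0 x0; rewrite dist_xx in h2; rewrite -h2.
  apply/eqP; rewrite cards_eq0; apply/eqP/setP => z; rewrite !inE.
  apply/negP => /andP [hz /eqP /dist0 hzx]; subst z; by rewrite hirr in hz.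
have hdeg y : #|[set z | e y z]| = b 0%N.
  by rewrite -(deg_lemma hsym hdr y y) dist_xx Hc0 Ha0.
apply: (@main_alg R _ (b 0%N)) => //.
- move=> i hi; have [w [w' [hw hw' hww']]] := ch i hi.
  by rewrite -hw deg_lemma // hdeg.
- move=> i hi; have [w [w' [hw hw' hww']]] := ch i hi.
  rewrite -hw; have [_ _ <-] := hdr x0 w.
  by apply/card_gt0P; exists w'; rewrite inE hww' hw' hw eqxx.
- have [w [w' [hw hw' hww']]] := ch 0%N (ltac:(lia)).
  have hwx := @dist0 T e x0 w hw; subst w.
  rewrite -hw'; have [<- _ _] := hdr x0 w'; rewrite hw'.
  have -> : [set z | e w' z & (dist e x0 z).+1 == 1%N] = [set x0].
    apply/setP => z; rewrite !inE eqSS; apply/andP/eqP.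
      by move=> [_ /eqP /(@dist0 T e x0 z)].
    by move=> ->; rewrite dist_xx (hsym w' x0) hww'.
  by rewrite cards1.
- lia.
Qed.
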